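(* Let $\kappa$ be a regular uncountable cardinal and $I$ an ideal on $\kappa$. If $I$ is quasinormal and prepleasant, then $I$ is pleasant, and therefore normal.
   Context: An ideal on $\kappa$ is a family of subsets of $\kappa$ closed under subsets and finite unions, which is $<\kappa$-complete and contains all singletons. $I^*=\{\kappa\setminus X: X\in I\}$. For $A\subseteq\kappa$ and $X_\alpha\subseteq\kappa$, $\bigtriangledown_{\alpha\in A}X_\alpha=\{\xi<\kappa:\exists\alpha<\xi\,(\alpha\in A\wedge \xi\in X_\alpha)\}$. $I$ is normal if $X_\alpha\in I$ for all $\alpha<\kappa$ implies $\bigtriangledown_{\alpha<\kappa}X_\alpha\in I$. $I$ is pleasant if whenever $A\in I$ and $X_\alpha\in I$ for all $\alpha$, then $\bigtriangledown_{\alpha\in A}X_\alpha\in I$. $I$ is prepleasant if for every $Q\in I$ and every sequence $\langle B_\alpha\rangle_{\alpha<\kappa}$ of bounded subsets of $\kappa$, $\bigtriangledown_{\alpha\in Q}B_\alpha\in I$. $I$ is quasinormal if for every sequence $\langle X_\alpha\rangle_{\alpha<\kappa}$ of members of $I$ there is $Q\in I^*$ with $\bigtriangledown_{\alpha\in Q}X_\alpha\in I$. *)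

(* Defs.v *)
(* a cardinal kappa is modelled as a type K with a strict
   well-order lt (the von Neumann ordinals below kappa); subsets of kappa
   are predicates K -> Prop; an ideal is a predicate on such subsets. *)
From Stdlib Require Import Relations Wellfounded.

Definition set_of (K : Type) := K -> Prop.

Definition seg {K : Type} (lt : K -> K -> Prop) (a : K) := {b : K | lt b a}.

Record reg_uncountable_cardinal (K : Type) (lt : K -> K -> Prop) : Prop := {
  rc_wf : well_founded lt;
  rc_trans : forall a b c, lt a b -> lt b c -> lt a c;
  rc_total : forall a b, lt a b \/ a = b \/ lt b a;
  rc_cardinal : forall a : K,
      ~ exists f : K -> seg lt a, forall x y, f x = f y -> x = y;
  rc_regular : forall (a : K) (f : seg lt a -> K),
      exists g : K, forall x, lt (f x) g;
  rc_uncountable : ~ exists f : K -> nat, forall x y, f x = f y -> x = y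
}.

Record is_ideal (K : Type) (lt : K -> K -> Prop) (I : set_of K -> Prop) : Prop := {
  id_subset : forall X Y : set_of K, I Y -> (forall x, X x -> Y x) -> I X;
  id_union : forall X Y : set_of K, I X -> I Y -> I (fun x => X x \/ Y x);
  id_complete : forall (a : K) (X : seg lt a -> set_of K),
      (forall b, I (X b)) -> I (fun x => exists b, X b x);
  id_singleton : forall a : K, I (fun x => x = a)
}.

Definition dual_filter {K : Type} (I : set_of K -> Prop) (Q : set_of K) : Prop :=
  exists X, I X /\ forall x, Q x <-> ~ X x.

Definition diag_union {K : Type} (lt : K -> K -> Prop)
    (A : set_of K) (X : K -> set_of K) : set_of K :=
  fun xi => exists alpha, lt alpha xi /\ A alpha /\ X alpha xi.

Definition bounded {K : Type} (lt : K -> K -> Prop) (B : set_of K) : Prop :=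
  exists g, forall x, B x -> lt x g.

Definition normal_ideal {K : Type} (lt : K -> K -> Prop) (I : set_of K -> Prop) :=
  forall X : K -> set_of K, (forall a, I (X a)) ->
    I (diag_union lt (fun _ => True) X).

Definition pleasant {K : Type} (lt : K -> K -> Prop) (I : set_of K -> Prop) :=
  forall (A : set_of K) (X : K -> set_of K), I A -> (forall a, I (X a)) ->
    I (diag_union lt A X).

Definition prepleasant {K : Type} (lt : K -> K -> Prop) (I : set_of K -> Prop) :=
  forall (Q : set_of K) (B : K -> set_of K), I Q -> (forall a, bounded lt (B a)) ->
    I (diag_union lt Q B).

Definition quasinormal {K : Type} (lt : K -> K -> Prop) (I : set_of K -> Prop) :=
  forall X : K -> set_of K, (forall a, I (X a)) ->
    exists Q, dual_filter I Q /\ I (diag_union lt Q X).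

(* Main.v *)
Require Import Defs.
From Stdlib Require Import Classical.

Lemma lt_irr K lt (Hk : reg_uncountable_cardinal K lt) : forall x, ~ lt x x.
Proof.
  intro x. induction (rc_wf _ _ Hk x) as [x _ IH]. intro H. exact (IH x H H).
Qed.

Lemma unb K lt (Hk : reg_uncountable_cardinal K lt) I (HI : is_ideal K lt I)
  (Q Xc : set_of K) : ~ I (fun _ => True) -> I Xc -> (forall x, ~ Xc x -> Q x) ->
  forall g, exists x, Q x /\ lt g x.
Proof.
  intros HT HX HQ g. apply NNPP. intro Hn. apply HT.
  pose proof (id_complete _ _ _ HI g (fun b x => x = proj1_sig b)
     (fun b => id_singleton _ _ _ HI (proj1_sig b))) as Hs.
  pose proof (id_union _ _ _ HI _ _ HX (id_union _ _ _ HI _ _ (id_singleton _ _ _ HI g) Hs)) as Hu.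
  apply (id_subset _ _ _ HI _ _ Hu). intros x _.
  destruct (classic (Xc x)) as [H|H]; [left; exact H|right].
  destruct (rc_total _ _ Hk x g) as [H1|[H1|H1]].
  - right. exists (exist _ x H1). reflexivity.
  - left. exact H1.
  - exfalso. apply Hn. exists x. split; [apply HQ; exact H|exact H1].
Qed.

Theorem corollary3p3 (K : Type) (lt : K -> K -> Prop)
    (Hk : reg_uncountable_cardinal K lt) (I : set_of K -> Prop)
    (HI : is_ideal K lt I) :
  quasinormal lt I -> prepleasant lt I -> pleasant lt I /\ normal_ideal lt I.
Proof.
  intros Hq Hp.
  destruct (classic (I (fun _ => True))) as [HT|HT].
  { split; [intros A X _ _|intros X _]; apply (id_subset _ _ _ HI _ _ HT); auto. }
  assert (Hpl : pleasant lt I).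
  { intros A X HA HX.
    set (Y := fun b xi => exists a, ~ lt b a /\ X a xi).
    assert (HY : forall b, I (Y b)).
    { intro b.
      pose proof (id_union _ _ _ HI _ _ (HX b)
        (id_complete _ _ _ HI b (fun c => X (proj1_sig c)) (fun c => HX (proj1_sig c)))) as Hu.
      apply (id_subset _ _ _ HI _ _ Hu). intros xi [a [H1 H2]].
      destruct (rc_total _ _ Hk a b) as [H3|[H3|H3]].
      - right. exists (exist _ a H3). exact H2.
      - left. subst. exact H2.
      - contradiction. }
    destruct (Hq Y HY) as [Q [[Xc [HXc HQc]] HQY]].
    assert (HQ : forall x, ~ Xc x -> Q x) by (intros x Hx; apply HQc; exact Hx).
    set (B := fun a xi => forall b, Q b -> lt b xi -> lt b a).
    assert (HB : forall a, bounded lt (B a)).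
    { intro a. destruct (unb K lt Hk I HI Q Xc HT HXc HQ a) as [q [Hq1 Hq2]].
      destruct (unb K lt Hk I HI Q Xc HT HXc HQ q) as [q2 [_ Hq3]].
      exists q2. intros xi Hxi.
      destruct (rc_total _ _ Hk xi q) as [H|[H|H]].
      - exact (rc_trans _ _ Hk _ _ _ H Hq3).
      - subst; exact Hq3.
      - exfalso. apply (lt_irr K lt Hk a).
        exact (rc_trans _ _ Hk _ _ _ Hq2 (Hxi q Hq1 H)). }
    pose proof (id_union _ _ _ HI _ _ HQY (Hp A B HA HB)) as Hu.
    apply (id_subset _ _ _ HI _ _ Hu). intros xi [a [H1 [H2 H3]]].
    destruct (classic (exists b, Q b /\ lt b xi /\ ~ lt b a)) as [[b [Hb1 [Hb2 Hb3]]]|Hn].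
    - left. exists b. split; [exact Hb2|split; [exact Hb1|]]. exists a. split; assumption.
    - right. exists a. split; [exact H1|split; [exact H2|]].
      intros b Hb1 Hb2. apply NNPP. intro Hb3. apply Hn. exists b. auto. }
  split; [exact Hpl|].
  intros X HX. destruct (Hq X HX) as [Q [[Xc [HXc HQc]] HQX]].
  pose proof (id_union _ _ _ HI _ _ HQX (Hpl Xc X HXc HX)) as Hu.
  apply (id_subset _ _ _ HI _ _ Hu). intros xi [a [H1 [_ H3]]].
  destruct (classic (Xc a)) as [H|H].
  - right. exists a. auto.
  - left. exists a. split; [exact H1|split; [apply HQc; exact H|exact H3]].
Qed.
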